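(* Let $\rho_{AB}$ be a density matrix on two qubits $\mathcal H_A\otimes\mathcal H_B=\mathbb C^2\otimes\mathbb C^2$ such that $\langle \psi|\rho_{AB}|\psi\rangle\geq 1-\epsilon$, where $|\psi\rangle_{AB}=\frac{1}{\sqrt2}(|00\rangle+|11\rangle)$ and $\epsilon\ge 0$. Then $\mu(\rho_{AB})\geq 1-2\epsilon$.
   Context: For a bipartite density matrix $\rho_{AB}$ on $\mathcal H_A\otimes\mathcal H_B$ with reduced states $\rho_A=\mathrm{tr}_B\rho_{AB}$, $\rho_B=\mathrm{tr}_A\rho_{AB}$, the maximal correlation is $\mu(\rho_{AB})=\max |\mathrm{tr}(\rho_{AB}\, X_A\otimes Y_B^\dagger)|$, the maximum over $X_A\in\mathbf L(\mathcal H_A)$, $Y_B\in\mathbf L(\mathcal H_B)$ subject to $\mathrm{tr}(\rho_A X_A)=\mathrm{tr}(\rho_B Y_B)=0$ and $\mathrm{tr}(\rho_A X_AX_A^\dagger)=\mathrm{tr}(\rho_B Y_BY_B^\dagger)=1$. *)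

(* Defs.v *)
From HB Require Import structures.
From mathcomp Require Import all_boot all_order all_algebra.
From mathcomp Require Import classical_sets reals.
From mathcomp Require Import complex mxtens.
Set Implicit Arguments. Unset Strict Implicit. Unset Printing Implicit Defensive.
Import Order.TTheory GRing.Theory Num.Theory.
Local Open Scope ring_scope. Local Open Scope classical_set_scope. Local Open Scope complex_scope.

Section QDefs.
Variable R : realType.
Local Notation C := R[i].

Definition ctrans m n (M : 'M[C]_(m, n)) : 'M[C]_(n, m) := map_mx Num.conj M^T.

Definition tidx m n (i : 'I_m) (j : 'I_n) : 'I_(m * n) := mxtens_index (i, j).

Definition ptraceB m n (rho : 'M[C]_(m * n)) : 'M[C]_m :=
  \matrix_(i, j) \sum_(k < n) rho (tidx i k) (tidx j k).
Definition ptraceA m n (rho : 'M[C]_(m * n)) : 'M[C]_n :=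
  \matrix_(i, j) \sum_(k < m) rho (tidx k i) (tidx k j).

Definition density d (rho : 'M[C]_d) : Prop :=
  ctrans rho = rho /\
  (forall v : 'cV[C]_d, 0 <= (ctrans v *m rho *m v) 0 0) /\
  \tr rho = 1.

Definition mc_feasible m n (rho : 'M[C]_(m * n)) (X : 'M[C]_m) (Y : 'M[C]_n) : Prop :=
  \tr (ptraceB rho *m X) = 0 /\ \tr (ptraceA rho *m Y) = 0 /\
  \tr (ptraceB rho *m (X *m ctrans X)) = 1 /\
  \tr (ptraceA rho *m (Y *m ctrans Y)) = 1.

Definition cmod (z : C) : R := complex.Re `|z|.

(* maximal correlation mu(rho_AB) (the max is written as a supremum) *)
Definition max_corr m n (rho : 'M[C]_(m * n)) : R :=
  sup [set r : R | exists (X : 'M[C]_m) (Y : 'M[C]_n),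
         mc_feasible rho X Y /\ r = cmod (\tr (rho *m (X *t ctrans Y)))].

Definition bell : 'cV[C]_(2 * 2) :=
  \col_k (if (k == tidx (0 : 'I_2) (0 : 'I_2)) || (k == tidx (1 : 'I_2) (1 : 'I_2))
          then ((Num.sqrt (2 : R))^-1)%:C else 0).

End QDefs.

(* Main.v *)
Require Import Defs.
From HB Require Import structures.
From mathcomp Require Import all_boot all_order all_algebra.
From mathcomp Require Import classical_sets reals.
From mathcomp Require Import complex mxtens.
Import Order.TTheory GRing.Theory Num.Theory.
Local Open Scope ring_scope. Local Open Scope classical_set_scope. Local Open Scope complex_scope.
From mathcomp Require Import ring lra boolp.
Set Implicit Arguments. Unset Strict Implicit. Unset Printing Implicit Defensive.

Section Gen.
Variable R : realType.
Local Notation C := R[i].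

Lemma ctransK m n (M : 'M[C]_(m, n)) : ctrans (ctrans M) = M.
Proof. by apply/matrixP=> i j; rewrite !mxE conjCK. Qed.

Lemma ctrans_mul m n p (A : 'M[C]_(m, n)) (B : 'M[C]_(n, p)) :
  ctrans (A *m B) = ctrans B *m ctrans A.
Proof. by rewrite /ctrans trmx_mul map_mxM. Qed.

Lemma ctransB m n (A B : 'M[C]_(m, n)) : ctrans (A - B) = ctrans A - ctrans B.
Proof. by rewrite /ctrans linearB map_mxB. Qed.

Lemma ctransZ m n c (A : 'M[C]_(m, n)) : ctrans (c *: A) = Num.conj c *: ctrans A.
Proof. by rewrite /ctrans linearZ map_mxZ. Qed.

Lemma ctrans1 n : ctrans (1%:M : 'M[C]_n) = 1%:M.
Proof. by rewrite /ctrans trmx1 map_mx1. Qed.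

Lemma ctrans_tens m n p q (A : 'M[C]_(m, n)) (B : 'M[C]_(p, q)) :
  ctrans (A *t B) = ctrans A *t ctrans B.
Proof. by rewrite /ctrans trmx_tens map_mxT. Qed.

Lemma tr_ctrans n (A : 'M[C]_n) : \tr (ctrans A) = Num.conj (\tr A).
Proof. by rewrite /ctrans /mxtrace rmorph_sum; apply: eq_bigr => i _; rewrite !mxE. Qed.

Lemma sum_tidx m n (F : 'I_(m * n) -> C) :
  \sum_k F k = \sum_(i < m) \sum_(j < n) F (tidx i j).
Proof.
rewrite pair_big /= [LHS](reindex (@mxtens_index m n)) /=.
  by apply: eq_bigr => -[i j] _.
by exists (@mxtens_unindex m n) => x _; [apply: mxtens_indexK | apply: mxtens_unindexK].
Qed.

Lemma sum2 (F : 'I_2 -> C) : \sum_(i < 2) F i = F 0 + F 1.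
Proof. by rewrite big_ord_recl big_ord1; congr (F _ + F _); apply: val_inj. Qed.

End Gen.

Section Form.
Variable R : realType.
Local Notation C := R[i].
Variable d : nat.
Variable rho : 'M[C]_d.

Definition gf (M N : 'M[C]_d) := \tr (rho *m (M *m ctrans N)).

Lemma gf_conj M N : ctrans rho = rho -> gf N M = Num.conj (gf M N).
Proof.
move=> h; rewrite /gf -tr_ctrans !ctrans_mul ctransK h.
by rewrite mxtrace_mulC.
Qed.

Lemma gf_ge0 M : (forall v : 'cV[C]_d, 0 <= (ctrans v *m rho *m v) 0 0) ->
  0 <= gf M M.
Proof.
move=> h; rewrite /gf mxtrace_mulC -mulmxA mxtrace_mulC.
rewrite /mxtrace; apply: sumr_ge0 => j _.
have := h (col j M).
have -> : (ctrans (col j M) *m rho *m col j M) 0 0 = (ctrans M *m rho *m M) j j.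
  rewrite !mxE; apply: eq_bigr => k _; rewrite !mxE; congr (_ * _).
  by apply: eq_bigr => l _; rewrite !mxE.
by [].

Qed.

Lemma gf_sub M N : gf (M - N) (M - N) = gf M M - gf M N - gf N M + gf N N.
Proof.
rewrite /gf ctransB !(mulmxBl, mulmxBr) !raddfB /=.
by rewrite opprK addrA.
Qed.

Lemma gf_scale c M N : gf (c *: M) (c *: N) = c * Num.conj c * gf M N.
Proof.
rewrite /gf ctransZ -scalemxAl -scalemxAr -scalemxAr -scalemxAr !mxtraceZ; exact: mulrA.
Qed.

Lemma gf_scalel c M N : gf (c *: M) N = c * gf M N.
Proof. by rewrite /gf -scalemxAl -scalemxAr mxtraceZ. Qed.

End Form.

Section CS.
Variable R : realType.
Local Notation C := R[i].
Variable d : nat.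
Variable rho : 'M[C]_d.
Hypothesis herm : ctrans rho = rho.
Hypothesis psd : forall v : 'cV[C]_d, 0 <= (ctrans v *m rho *m v) 0 0.

Lemma gf_bound M N (c : C) : c * Num.conj c = 1 ->
  2 * complex.Re (c * gf rho M N) <= complex.Re (gf rho M M) + complex.Re (gf rho N N).
Proof.
move=> hc; have := gf_ge0 (c *: M - N) psd.
rewrite gf_sub gf_scale hc mul1r (gf_conj (c *: M) N herm) gf_scalel.
move: (c * gf rho M N) (gf rho M M) (gf rho N N) => [a b] [x y] [u v].
rewrite lecE /= => /andP [_]; rewrite /Num.conj /=.
simpc => /=. move=> h. lra.
Qed.

Lemma gf_cmod M N :
  cmod (gf rho M N) <= complex.Re (gf rho M M) + complex.Re (gf rho N N).
Proof.
have h1 := @gf_bound M N 1.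
have h2 := @gf_bound M N (-1).
have h3 := @gf_bound M N 'i.
have h4 := @gf_bound M N (-'i).
move: h1 h2 h3 h4; rewrite /cmod normc_def /=.
move: (gf rho M N) (complex.Re (gf rho M M) + complex.Re (gf rho N N)) => [a b] S.
rewrite /Num.conj /=; simpc => /= h1 h2 h3 h4.
have {h1}h1 := h1 erefl; have {h2}h2 := h2 erefl.
have {h3}h3 := h3 erefl; have {h4}h4 := h4 erefl.
have S0 : 0 <= S by lra.
rewrite -(ger0_norm S0) -sqrtr_sqr ler_sqrt; last by rewrite exprn_ge0.
nra.
Qed.
End CS.

Section PT.
Variable R : realType.
Local Notation C := R[i].

Lemma trPB m n (rho : 'M[C]_(m * n)) (A : 'M[C]_m) :
  \tr (rho *m (A *t (1%:M : 'M[C]_n))) = \tr (ptraceB rho *m A).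
Proof.
rewrite /mxtrace sum_tidx; apply: eq_bigr => i _.
rewrite !mxE.
under [RHS]eq_bigr do rewrite /ptraceB mxE big_distrl.
rewrite [RHS]exchange_big /=; apply: eq_bigr => j _.
rewrite mxE sum_tidx; apply: eq_bigr => i' _.
rewrite (bigD1 j) //= big1 => [|j' /negbTE hj].
  by rewrite /tidx tensmxE !mxE eqxx mulr1 addr0.
by rewrite /tidx tensmxE !mxE hj mulr0 mulr0.
Qed.

Lemma trPA m n (rho : 'M[C]_(m * n)) (B : 'M[C]_n) :
  \tr (rho *m ((1%:M : 'M[C]_m) *t B)) = \tr (ptraceA rho *m B).
Proof.
rewrite /mxtrace sum_tidx exchange_big /=; apply: eq_bigr => j _.
rewrite !mxE.
under [RHS]eq_bigr do rewrite /ptraceA mxE big_distrl.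
rewrite [RHS]exchange_big /=; apply: eq_bigr => i _.
rewrite mxE sum_tidx exchange_big /=; apply: eq_bigr => j' _.
rewrite (bigD1 i) //= big1 => [|i' /negbTE hi].
  by rewrite /tidx tensmxE !mxE eqxx mul1r addr0.
by rewrite /tidx tensmxE !mxE hi mul0r mulr0.
Qed.
End PT.

Section Bound.
Variable R : realType.
Local Notation C := R[i].

Lemma feasible_bound m n (rho : 'M[C]_(m * n)) X Y :
  density rho -> mc_feasible rho X Y ->
  cmod (\tr (rho *m (X *t ctrans Y))) <= 2.
Proof.
move=> [herm [psd _]] [_ [_ [hX hY]]].
have := gf_cmod herm psd (X *t (1%:M : 'M[C]_n)) ((1%:M : 'M[C]_m) *t Y).
rewrite /gf !ctrans_tens !ctrans1 !tensmx_mul !mulmx1 !mul1mx trPB trPA hX hY.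
by move=> h; apply: (le_trans h); rewrite /= -[2]/(1 + 1).
Qed.
End Bound.

Section Deltas.
Variable R : realType.
Local Notation C := R[i].
Variable d : nat.
Variable rho : 'M[C]_d.

Lemma ctransD m n (A B : 'M[C]_(m, n)) : ctrans (A + B) = ctrans A + ctrans B.
Proof. by rewrite /ctrans linearD map_mxD. Qed.

Lemma ctrans_delta (k : 'I_d) : ctrans (delta_mx k 0 : 'cV[C]_d) = delta_mx 0 k.
Proof. by apply/matrixP => i j; rewrite !mxE rmorph_nat andbC. Qed.

Lemma qf_delta (k l : 'I_d) : ((delta_mx 0 k : 'rV[C]_d) *m rho *m (delta_mx l 0 : 'cV[C]_d)) 0 0 = rho k l.
Proof. by rewrite -(rowE k rho) -colE !mxE. Qed.

End Deltas.


Section Deltas2.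
Variable R : realType.
Local Notation C := R[i].
Variable d : nat.
Variable rho : 'M[C]_d.
Lemma qf2 (a b : C) (k l : 'I_d) :
  let v : 'cV[C]_d := a *: delta_mx k 0 + b *: delta_mx l 0 in
  (ctrans v *m rho *m v) 0 0 =
  Num.conj a * a * rho k k + Num.conj a * b * rho k l
  + Num.conj b * a * rho l k + Num.conj b * b * rho l l.
Proof.
rewrite /= ctransD !ctransZ !ctrans_delta.
rewrite !(mulmxDl, mulmxDr).
rewrite -!scalemxAl -!scalemxAr.
set P1 := (X in a^* *: (a *: X)).
set P2 := (X in b^* *: (a *: X)).
set P3 := (X in a^* *: (b *: X)).
set P4 := (X in b^* *: (b *: X)).
have e1 : P1 0 0 = rho k k := qf_delta rho k k.
have e2 : P2 0 0 = rho l k := qf_delta rho l k.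
have e3 : P3 0 0 = rho k l := qf_delta rho k l.
have e4 : P4 0 0 = rho l l := qf_delta rho l l.
clearbody P1 P2 P3 P4.
rewrite !mxE e1 e2 e3 e4 !mulrA.
move: (_ * _ * rho k k) (_ * _ * rho l k) (_ * _ * rho k l) (_ * _ * rho l l) => x1 x2 x3 x4.
ring.
Qed.
End Deltas2.

Section Diag.
Variable R : realType.
Local Notation C := R[i].

Lemma tr_diag n (A : 'M[C]_n) (d : 'rV[C]_n) :
  \tr (A *m diag_mx d) = \sum_i A i i * d 0 i.
Proof. by rewrite mul_mx_diag /mxtrace; apply: eq_bigr => i _; rewrite mxE. Qed.

Lemma tr_tens_diag m n (rho : 'M[C]_(m * n)) (dx : 'rV[C]_m) (dy : 'rV[C]_n) :
  \tr (rho *m (diag_mx dx *t diag_mx dy)) =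
  \sum_i \sum_j rho (tidx i j) (tidx i j) * (dx 0 i * dy 0 j).
Proof.
rewrite /mxtrace sum_tidx; apply: eq_bigr => i _; apply: eq_bigr => j _.
rewrite mxE sum_tidx (bigD1 i) //= [X in _ + X]big1 ?addr0; last first.
  move=> i' hi; apply: big1 => j' _.
  by rewrite /tidx tensmxE !mxE (negbTE hi) mulr0n mul0r mulr0.
rewrite (bigD1 j) //= big1 ?addr0; last first.
  by move=> j' hj; rewrite /tidx tensmxE !mxE (negbTE hj) mulr0n mulr0 mulr0.
by rewrite /tidx tensmxE !mxE !eqxx !mulr1n.
Qed.
End Diag.

Section Two.
Variable R : realType.
Local Notation C := R[i].
Variable rho : 'M[C]_(2 * 2).
Hypothesis herm : ctrans rho = rho.
Hypothesis psd : forall v : 'cV[C]_(2 * 2), 0 <= (ctrans v *m rho *m v) 0 0.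

Lemma herm_entry k l : rho l k = Num.conj (rho k l).
Proof. by rewrite -{1}herm !mxE. Qed.

Lemma diag_ge0 k : 0 <= rho k k.
Proof. by have := psd (delta_mx k 0); rewrite ctrans_delta qf_delta. Qed.

Lemma diagR k : rho k k = (complex.Re (rho k k))%:C.
Proof.
have := diag_ge0 k; case: (rho k k) => a b; rewrite lecE /= => /andP [/eqP h _].
by rewrite h.
Qed.

Lemma Re_diag_ge0 k : 0 <= complex.Re (rho k k).
Proof. by have := diag_ge0 k; case: (rho k k) => a b; rewrite lecE /= => /andP [_ h]. Qed.

Lemma psd2 k l (x y : R) :
  0 <= x ^+ 2 * complex.Re (rho k k) + 2 * x * y * complex.Re (rho k l)
       + y ^+ 2 * complex.Re (rho l l).
Proof.
have := psd (x%:C *: delta_mx k 0 + y%:C *: delta_mx l 0).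
rewrite qf2 (herm_entry k l) (diagR k) (diagR l).
move: (complex.Re (rho k k)) (complex.Re (rho l l)) (rho k l) => p q [a b].
rewrite lecE /Num.conj /=; simpc => /andP [_ h].
by move: h; congr (0 <= _); ring.
Qed.

Notation k00 := (tidx (0 : 'I_2) (0 : 'I_2)).
Notation k01 := (tidx (0 : 'I_2) (1 : 'I_2)).
Notation k10 := (tidx (1 : 'I_2) (0 : 'I_2)).
Notation k11 := (tidx (1 : 'I_2) (1 : 'I_2)).

Lemma bellE : bell R = ((Num.sqrt (2 : R))^-1)%:C *: delta_mx k00 0
                      + ((Num.sqrt (2 : R))^-1)%:C *: delta_mx k11 0.
Proof.
apply/matrixP => i j; rewrite !mxE (ord1 j) eqxx !andbT.
have e1 : (k00 == k11) = false by [].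
have e2 : (k11 == k00) = false by [].
have [->|h0] := eqVneq i k00.
  by rewrite e1 /= mulr1n mulr0n mulr1 mulr0 addr0.
case: (i == k11) => /=.
  by rewrite mulr1n mulr0n mulr1 mulr0 add0r.
by rewrite mulr0n mulr0 addr0.
Qed.

Lemma fidRe : complex.Re ((ctrans (bell R) *m rho *m bell R) 0 0) =
  (complex.Re (rho k00 k00) + complex.Re (rho k11 k11) + 2 * complex.Re (rho k00 k11)) / 2.
Proof.
rewrite bellE qf2 (herm_entry k00 k11).
have hs : (Num.sqrt (2 : R))^-1 ^+ 2 = 1 / 2.
  by rewrite exprVn sqr_sqrtr ?div1r // ler0n.
move: hs; move: ((Num.sqrt (2 : R))^-1) (rho k00 k00) (rho k11 k11) (rho k00 k11)
  => c [a1 b1] [a2 b2] [a3 b3] hs /=.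
rewrite /Num.conj /=; simpc => /=.
have -> : c * c = 1 / 2 by rewrite -hs expr2.
ring.
Qed.

Definition rw (a b : R) : 'rV[C]_2 := \row_i (if i == 0 then a%:C else b%:C).
Lemma rw0 a b : rw a b 0 0 = a%:C. Proof. by rewrite mxE. Qed.
Lemma rw1 a b : rw a b 0 1 = b%:C. Proof. by rewrite mxE. Qed.

Local Notation pp := (complex.Re (rho k00 k00)).
Local Notation rr := (complex.Re (rho k01 k01)).
Local Notation ss := (complex.Re (rho k10 k10)).
Local Notation qq := (complex.Re (rho k11 k11)).

Lemma trA1 a b : \tr (ptraceB rho *m diag_mx (rw a b)) = ((pp + rr) * a + (ss + qq) * b)%:C.
Proof.
rewrite tr_diag sum2 rw0 rw1 !mxE !sum2.
rewrite [in LHS](diagR k00) [in LHS](diagR k01) [in LHS](diagR k10) [in LHS](diagR k11).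
by rewrite -!complexr0; simpc.
Qed.

Lemma ctrans_diag a b : ctrans (diag_mx (rw a b)) = diag_mx (rw a b).
Proof.
apply/matrixP => i j; rewrite !mxE.
have [->|ne] := eqVneq i j.
  by rewrite !mulr1n; case: ifP => _; exact: conjc_real.
by rewrite !mulr0n; exact: conjc0.
Qed.

Lemma trA2 a b : \tr (ptraceB rho *m (diag_mx (rw a b) *m ctrans (diag_mx (rw a b))))
  = ((pp + rr) * a ^+ 2 + (ss + qq) * b ^+ 2)%:C.
Proof.
rewrite ctrans_diag mulmxA tr_diag sum2 mul_mx_diag !mxE !sum2.
rewrite [in LHS](diagR k00) [in LHS](diagR k01) [in LHS](diagR k10) [in LHS](diagR k11).
have e10 : ((1 : 'I_2) == 0) = false by [].
rewrite eqxx e10 -!complexr0; simpc.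
by congr (_ +i* _); ring.
Qed.

Lemma trB1 a b : \tr (ptraceA rho *m diag_mx (rw a b)) = ((pp + ss) * a + (rr + qq) * b)%:C.
Proof.
rewrite tr_diag sum2 rw0 rw1 !mxE !sum2.
rewrite [in LHS](diagR k00) [in LHS](diagR k01) [in LHS](diagR k10) [in LHS](diagR k11).
by rewrite -!complexr0; simpc; congr (_ +i* _); ring.
Qed.

Lemma trB2 a b : \tr (ptraceA rho *m (diag_mx (rw a b) *m ctrans (diag_mx (rw a b))))
  = ((pp + ss) * a ^+ 2 + (rr + qq) * b ^+ 2)%:C.
Proof.
rewrite ctrans_diag mulmxA tr_diag sum2 mul_mx_diag !mxE !sum2.
rewrite [in LHS](diagR k00) [in LHS](diagR k01) [in LHS](diagR k10) [in LHS](diagR k11).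
have e10 : ((1 : 'I_2) == 0) = false by [].
rewrite eqxx e10 -!complexr0; simpc.
by congr (_ +i* _); ring.
Qed.

Lemma corrE x0 x1 y0 y1 :
  \tr (rho *m (diag_mx (rw x0 x1) *t ctrans (diag_mx (rw y0 y1)))) =
  (pp * x0 * y0 + rr * x0 * y1 + ss * x1 * y0 + qq * x1 * y1)%:C.
Proof.
rewrite ctrans_diag tr_tens_diag !sum2 !rw0 !rw1.
rewrite [in LHS](diagR k00) [in LHS](diagR k01) [in LHS](diagR k10) [in LHS](diagR k11).
by rewrite -!complexr0; simpc; congr (_ +i* _); ring.
Qed.
End Two.

Section RealPart.
Variable R : realType.

Lemma poly_ineq (p q r s m : R) : 0 <= p -> 0 <= q -> 0 <= r -> 0 <= s ->
  0 <= p + q - 2 * m -> m ^+ 2 <= p * q ->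
  (2 * m - r - s) * ((p + r) * (q + r) + (p + s) * (q + s)) <= 2 * (p * q - r * s) * (p + q + r + s).
Proof.
move=> hp hq hr hs hd hm.
have E : 2 * (p * q - r * s) * (p + q + r + s) - (2 * m - r - s) * ((p + r) * (q + r) + (p + s) * (q + s))
  = (p + q - 2 * m) * (2 * (m - (r + s) / 2) ^+ 2 + (r - s) ^+ 2 / 2) + (r + s) * (r - s) ^+ 2
    + 2 * (p * q - m ^+ 2) * ((p + q - 2 * m) + 2 * (r + s)).
  by field.
rewrite -subr_ge0 E.
have h1 : 0 <= (p + q - 2 * m) * (2 * (m - (r + s) / 2) ^+ 2 + (r - s) ^+ 2 / 2).
  apply: mulr_ge0 => //; apply: addr_ge0; [apply: mulr_ge0 => //; exact: sqr_ge0|].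
  by apply: divr_ge0 => //; exact: sqr_ge0.
have h2 : 0 <= (r + s) * (r - s) ^+ 2 by apply: mulr_ge0; [lra| exact: sqr_ge0].
have h3 : 0 <= 2 * (p * q - m ^+ 2) * ((p + q - 2 * m) + 2 * (r + s)).
  by apply: mulr_ge0; [apply: mulr_ge0; lra| lra].
lra.
Qed.

Lemma main_real (p q r s m eps : R) : 0 <= p -> 0 <= q -> 0 <= r -> 0 <= s ->
  p + q + r + s = 1 -> 0 <= p + q - 2 * m ->
  0 <= p * (p * q - m ^+ 2) -> 0 <= q * (p * q - m ^+ 2) ->
  1 - eps <= (p + q + 2 * m) / 2 -> 0 < 1 - 2 * eps ->
  exists x0 x1 y0 y1 : R,
    [/\ (p + r) * x0 + (s + q) * x1 = 0, (p + r) * x0 ^+ 2 + (s + q) * x1 ^+ 2 = 1,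
        (p + s) * y0 + (r + q) * y1 = 0, (p + s) * y0 ^+ 2 + (r + q) * y1 ^+ 2 = 1 &
        1 - 2 * eps <= p * x0 * y0 + r * x0 * y1 + s * x1 * y0 + q * x1 * y1].
Proof.
move=> hp hq hr hs hsum hd hpm hqm hfid hpos.
have hK : 1 - 2 * eps <= 2 * m - r - s by lra.
have m0 : 0 < m by lra.
have hm : m ^+ 2 <= p * q.
  have : 0 <= (p + q) * (p * q - m ^+ 2) by rewrite mulrDl; lra.
  rewrite pmulr_rge0; last by lra.
  by rewrite subr_ge0.
have pq0 : 0 < p * q by apply: lt_le_trans hm; rewrite exprn_gt0.
have p0 : 0 < p.
  by rewrite lt_neqAle hp andbT; apply/eqP => h; move: pq0; rewrite -h mul0r ltxx.
have q0 : 0 < q.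
  by rewrite lt_neqAle hq andbT; apply/eqP => h; move: pq0; rewrite -h mulr0 ltxx.
set a0 := p + r; set a1 := s + q; set b0 := p + s; set b1 := r + q.
have a00 : 0 < a0 by rewrite /a0; lra.
have a10 : 0 < a1 by rewrite /a1; lra.
have b00 : 0 < b0 by rewrite /b0; lra.
have b10 : 0 < b1 by rewrite /b1; lra.
set sA := Num.sqrt (a0 * a1); set sB := Num.sqrt (b0 * b1).
have sA2 : sA ^+ 2 = a0 * a1 by rewrite sqr_sqrtr // mulr_ge0 // ltW.
have sB2 : sB ^+ 2 = b0 * b1 by rewrite sqr_sqrtr // mulr_ge0 // ltW.
have sA0 : 0 < sA by rewrite sqrtr_gt0 mulr_gt0.
have sB0 : 0 < sB by rewrite sqrtr_gt0 mulr_gt0.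
exists (sA / a0), (- (sA / a1)), (sB / b0), (- (sB / b1)); split.
- by field; rewrite !lt0r_neq0.
- rewrite !expr_div_n sqrrN expr_div_n sA2.
  transitivity (a1 + a0); first by field; rewrite !lt0r_neq0.
  by rewrite /a0 /a1; lra.
- by field; rewrite !lt0r_neq0.
- rewrite !expr_div_n sqrrN expr_div_n sB2.
  transitivity (b1 + b0); first by field; rewrite !lt0r_neq0.
  by rewrite /b0 /b1; lra.
set V := (X in _ <= X).
have hV : V * (sA * sB) = p * q - r * s.
  transitivity (sA ^+ 2 * sB ^+ 2 * (p / (a0 * b0) - r / (a0 * b1) - s / (a1 * b0) + q / (a1 * b1))).
    by rewrite /V; field; rewrite !lt0r_neq0.
  rewrite sA2 sB2.
  transitivity (p * a1 * b1 - r * a1 * b0 - s * a0 * b1 + q * a0 * b0).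
    by field; rewrite !lt0r_neq0.
  rewrite /a0 /a1 /b0 /b1.
  have -> : p * (s + q) * (r + q) - r * (s + q) * (p + s) - s * (p + r) * (r + q) + q * (p + r) * (p + s)
     = (p * q - r * s) * (p + q + r + s) by ring.
  by rewrite hsum mulr1.
have hAB : 2 * (sA * sB) <= a0 * b1 + a1 * b0.
  have ht : (sA * sB) ^+ 2 = (a0 * b1) * (a1 * b0) by rewrite exprMn sA2 sB2; ring.
  have u0 : 0 < a0 * b1 by apply: mulr_gt0.
  have w0 : 0 < a1 * b0 by apply: mulr_gt0.
  have t0 : 0 < sA * sB by apply: mulr_gt0.
  move: ht u0 w0 t0; move: (sA * sB) (a0 * b1) (a1 * b0) => t u w ht u0 w0 t0.
  have h2 : (2 * t) ^+ 2 <= (u + w) ^+ 2.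
    have := sqr_ge0 (u - w); rewrite exprMn ht; nra.
  nra.
have hP := poly_ineq hp hq hr hs hd hm.
have t0 : 0 < sA * sB by apply: mulr_gt0.
have hK0 : 0 < 2 * m - r - s by lra.
have : (2 * m - r - s) * (2 * (sA * sB)) <= V * (2 * (sA * sB)).
  apply: (le_trans (y := (2 * m - r - s) * (a0 * b1 + a1 * b0))).
    by rewrite ler_pM2l.
  rewrite mulrCA hV.
  move: hP; rewrite hsum mulr1 /a0 /a1 /b0 /b1.
  have -> : (s + q) * (p + s) = (p + s) * (q + s) by ring.
  by have -> : (p + r) * (r + q) = (p + r) * (q + r) by ring.
move=> h.
move: h; rewrite ler_pM2r; last by rewrite mulr_gt0.
lra.
Qed.
End RealPart.

Theorem lemma1 (R : realType) (rho : 'M[R[i]]_(2 * 2)) (eps : R) :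
  density rho -> 0 <= eps ->
  ((1 - eps)%:C <= (ctrans (bell R) *m rho *m bell R) 0 0) ->
  1 - 2 * eps <= max_corr rho.
Proof.
move=> hd he hfid; have [herm [psd tr1]] := hd.
rewrite /max_corr; set E := (X in sup X).
have E0 : forall r, E r -> 0 <= r.
  move=> r [X [Y [_ ->]]]; rewrite /cmod normc_def /=; exact: sqrtr_ge0.
have Eub : has_ubound E.
  by exists 2 => r [X [Y [hf ->]]]; exact: feasible_bound.
have [h|h] := leP (1 - 2 * eps) 0.
  apply: le_trans h _.
  have [[r Er]|ne] := pselect (E !=set0).
    by apply: le_trans (E0 r Er) _; apply: ub_le_sup.
  by rewrite sup_out // => -[].
pose k00 := tidx (0 : 'I_2) (0 : 'I_2). pose k01 := tidx (0 : 'I_2) (1 : 'I_2).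
pose k10 := tidx (1 : 'I_2) (0 : 'I_2). pose k11 := tidx (1 : 'I_2) (1 : 'I_2).
have hsum : complex.Re (rho k00 k00) + complex.Re (rho k11 k11)
    + complex.Re (rho k01 k01) + complex.Re (rho k10 k10) = 1.
  move: tr1; rewrite /mxtrace sum_tidx !sum2 => /(congr1 (@complex.Re R)) /=.
  rewrite !raddfD /=; lra.
have hd1 := psd2 herm psd k00 k11 1 (-1).
have hpm := psd2 herm psd k00 k11 (complex.Re (rho k00 k11)) (- complex.Re (rho k00 k00)).
have hqm := psd2 herm psd k00 k11 (complex.Re (rho k11 k11)) (- complex.Re (rho k00 k11)).
have hf : 1 - eps <= (complex.Re (rho k00 k00) + complex.Re (rho k11 k11)
    + 2 * complex.Re (rho k00 k11)) / 2.
  by move: hfid; rewrite lecE => /andP [_]; rewrite fidRe.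
have p0 := Re_diag_ge0 psd k00. have q0 := Re_diag_ge0 psd k11.
have r0 := Re_diag_ge0 psd k01. have s0 := Re_diag_ge0 psd k10.
set p := complex.Re (rho k00 k00) in hsum hd1 hpm hqm hf p0 *.
set q := complex.Re (rho k11 k11) in hsum hd1 hpm hqm hf q0 *.
set r := complex.Re (rho k01 k01) in hsum r0 *.
set s := complex.Re (rho k10 k10) in hsum s0 *.
set m := complex.Re (rho k00 k11) in hd1 hpm hqm hf *.
have hd' : 0 <= p + q - 2 * m by lra.
have hpm' : 0 <= p * (p * q - m ^+ 2) by lra.
have hqm' : 0 <= q * (p * q - m ^+ 2) by lra.
have [x0 [x1 [y0 [y1 [e1 e2 e3 e4 hv]]]]] :=
  main_real p0 q0 r0 s0 hsum hd' hpm' hqm' hf h.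
pose X := diag_mx (rw x0 x1); pose Y := diag_mx (rw y0 y1).
have feas : mc_feasible rho X Y.
  split; first by rewrite /X trA1 // e1.
  split; first by rewrite /Y trB1 // e3.
  split; first by rewrite /X trA2 // e2.
  by rewrite /Y trB2 // e4.
have Ev : E (cmod (\tr (rho *m (X *t ctrans Y)))) by exists X, Y.
apply: le_trans (ub_le_sup Eub Ev).
rewrite /X /Y corrE // /cmod normc_def /= expr0n /= addr0 sqrtr_sqr.
exact: le_trans hv (ler_norm _).
Qed.
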